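(* Let $a>b\geq c>d>0$ and let $p,q$ be real numbers with $p,q\notin\{0,-1\}$. Then $$\frac{L_{p}^{p}(a,b)}{L_{p}^{p}(c,d)}\geq \frac{L_{q}^{q}(a,b)}{L_{q}^{q}(c,d)}\left(1+\frac{p-q}{q+1}\,\ln\frac{I(a^{q+1},b^{q+1})}{I(c^{q+1},d^{q+1})}\right),$$ with equality if and only if $p=q$. In particular, $$\exp\left(1-\frac{L(c,d)}{L(a,b)}\right)<\frac{I(a,b)}{I(c,d)}<\exp\left(\frac{L(a,b)}{L(c,d)}-1\right),$$ and for all $a>b>0$, $$\exp\left(1-\frac{b}{L(a,b)}\right)<\frac{I(a,b)}{b}<\exp\left(\frac{L(a,b)}{b}-1\right).$$
   Context: For $u,v>0$: the logarithmic mean is $L(u,v)=\frac{u-v}{\ln u-\ln v}$ if $u\neq v$ and $L(u,u)=u$; the identric mean is $I(u,v)=\frac{1}{e}\left(\frac{u^u}{v^v}\right)^{1/(u-v)}$ if $u\neq v$ and $I(u,u)=u$; for $p\neq 0,-1$ the $p$-logarithmic mean is $L_p(u,v)=\left(\frac{u^{p+1}-v^{p+1}}{(p+1)(u-v)}\right)^{1/p}$ if $u\neq v$ and $L_p(u,u)=u$. $L_p^p$ denotes the $p$-th power of $L_p$. *)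

(* Defs.v *)
From Stdlib Require Export Reals.
Open Scope R_scope.

Definition logmean (u v : R) : R :=
  if Req_EM_T u v then u else (u - v) / (ln u - ln v).

Definition identric (u v : R) : R :=
  if Req_EM_T u v then u
  else / exp 1 * Rpower (Rpower u u / Rpower v v) (/ (u - v)).

Definition plogmean (p u v : R) : R :=
  if Req_EM_T u v then u
  else Rpower ((Rpower u (p + 1) - Rpower v (p + 1)) / ((p + 1) * (u - v))) (/ p).

Definition plogmean_pow (p u v : R) : R := Rpower (plogmean p u v) p.

(* Main.v *)
Require Import Defs.
From Stdlib Require Import Reals Lra Psatz.
From Coquelicot Require Import Coquelicot.


Lemma sign_deriv (f f' : R -> R) :
  f 0 = 0 -> (forall y, derivable_pt_lim f y (f' y)) ->
  (forall y, y <> 0 -> 0 < f' y) ->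
  forall y, y <> 0 -> 0 < y * f y.
Proof.
  intros H0 Hd Hp y Hy.
  destruct (Rlt_or_le 0 y) as [Hpos|Hneg].
  - destruct (MVT_cor2 f f' 0 y Hpos (fun c _ => Hd c)) as [c [Hc1 Hc2]].
    rewrite H0 in Hc1. assert (0 < f' c) by (apply Hp; lra).
    assert (0 < f y) by (rewrite Rminus_0_r in Hc1; rewrite Hc1; nra). nra.
  - assert (Hn : y < 0) by lra.
    destruct (MVT_cor2 f f' y 0 Hn (fun c _ => Hd c)) as [c [Hc1 Hc2]].
    rewrite H0 in Hc1. assert (0 < f' c) by (apply Hp; lra).
    assert (f y < 0) by nra. nra.
Qed.

Lemma exp_pos_ne y : y <> 0 -> 0 < y * (exp y - 1).
Proof.
  intros Hy. pose proof (exp_ineq1 y Hy).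
  destruct (Rlt_or_le 0 y); [nra|].
  assert (y < 0) by lra. assert (exp y < 1).
  { rewrite <- exp_0. apply exp_increasing; lra. } nra.
Qed.

Lemma G_sign y : y <> 0 -> 0 < y * (y*(exp y + 1) - 2*(exp y - 1)).
Proof.
  intro Hy.
  apply (sign_deriv (fun y => y*(exp y + 1) - 2*(exp y - 1))
                    (fun y => 1 - exp y * (1 - y))); auto.
  - rewrite exp_0; ring.
  - intro z. apply is_derive_Reals. auto_derive; auto. ring.
  - intros z Hz. pose proof (exp_ineq1 (-z) ltac:(lra)).
    rewrite exp_Ropp in H. pose proof (exp_pos z).
    apply Rmult_lt_compat_l with (r := exp z) in H; auto.
    rewrite Rinv_r in H; [|lra]. nra.
Qed.

Lemma H_sign y : y <> 0 -> 0 < y * (exp y - / exp y - 2*y).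
Proof.
  intro Hy.
  apply (sign_deriv (fun y => exp y - / exp y - 2*y)
                    (fun y => (exp y - 1)^2 / exp y)); auto.
  - rewrite exp_0; field.
  - intro z. apply is_derive_Reals. auto_derive. 
    + pose proof (exp_pos z); lra.
    + pose proof (exp_pos z). field. lra.
  - intros z Hz. pose proof (exp_pos z). pose proof (exp_pos_ne z Hz).
    apply Rdiv_lt_0_compat; auto. assert (exp z - 1 <> 0) by (intro E; rewrite E in H0; lra).
    nra.
Qed.

Lemma K_ineq y : y <> 0 -> y^2 * exp y < (exp y - 1)^2.
Proof.
  intro Hy. pose proof (H_sign (y/2) ltac:(lra)) as H.
  set (s := exp (y/2)) in *.
  assert (Hs : exp y = s*s) by (unfold s; rewrite <- exp_plus; f_equal; lra).
  assert (0 < s) by apply exp_pos.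
  rewrite Hs.
  assert (Hd : s - / s = (s*s - 1)/s) by (field; lra).
  rewrite Hd in H.
  assert (y^2 < ((s*s-1)/s)^2).
  { destruct (Rlt_or_le 0 y).
    - assert (y < (s*s-1)/s) by nra. nra.
    - assert ((s*s-1)/s < y) by nra. nra. }
  assert (((s*s-1)/s)^2 * (s*s) = (s*s-1)^2) by (field; lra).
  nra.
Qed.

Lemma mvt_nz (f df : R -> R) a b :
  (forall y, y <> 0 -> derivable_pt_lim f y (df y)) ->
  a < b -> (0 < a \/ b < 0) ->
  exists c, f b - f a = df c * (b - a) /\ a < c < b.
Proof.
  intros Hd Hab Hs. apply MVT_cor2; auto.
  intros c Hc. apply Hd. lra.
Qed.

Lemma mono_gen (f f' : R -> R) (c : R) :
  (forall y, y <> 0 -> derivable_pt_lim f y (f' y)) ->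
  (forall y, y <> 0 -> 0 < f' y) ->
  (forall y, 0 < y -> c < f y) -> (forall y, y < 0 -> f y < c) ->
  forall s t, s <> 0 -> t <> 0 -> s < t -> f s < f t.
Proof.
  intros Hd Hp Hc1 Hc2 s t Hs Ht Hst.
  destruct (Rlt_or_le 0 s).
  - destruct (mvt_nz f f' s t Hd Hst (or_introl H)) as [x [H1 H2]].
    assert (0 < f' x) by (apply Hp; lra). nra.
  - destruct (Rlt_or_le t 0).
    + destruct (mvt_nz f f' s t Hd Hst (or_intror H0)) as [x [H1 H2]].
      assert (0 < f' x) by (apply Hp; lra). nra.
    + assert (f s < c) by (apply Hc2; lra). assert (c < f t) by (apply Hc1; lra). lra.
Qed.

Lemma tangent_gen (f df : R -> R) (c : R) :
  (forall y, y <> 0 -> derivable_pt_lim f y (df y)) ->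
  (forall s t, s <> 0 -> t <> 0 -> s < t -> df s < df t) ->
  (forall y, 0 < y -> c < df y) -> (forall y, y < 0 -> df y < c) ->
  (forall e, 0 < e -> f e - f (-e) = 2*c*e) ->
  forall y y0, y <> 0 -> y0 <> 0 -> y <> y0 -> f y0 + (y - y0) * df y0 < f y.
Proof.
  intros Hd Hm Hc1 Hc2 Hsym y y0 Hy Hy0 Hne.
  destruct (Rlt_or_le y y0) as [Hlt|Hle].
  - destruct (Rlt_or_le 0 y) as [Hp|Hn].
    + destruct (mvt_nz f df y y0 Hd Hlt (or_introl Hp)) as [x [H1 H2]].
      assert (df x < df y0) by (apply Hm; lra). nra.
    + destruct (Rlt_or_le y0 0) as [Hn0|Hp0].
      * destruct (mvt_nz f df y y0 Hd Hlt (or_intror Hn0)) as [x [H1 H2]].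
        assert (df x < df y0) by (apply Hm; lra). nra.
      *
        assert (Hyn : y < 0) by lra. assert (Hy0p : 0 < y0) by lra.
        set (e := Rmin (-y) y0 / 2).
        assert (He : 0 < e /\ e < -y /\ e < y0).
        { unfold e; unfold Rmin; destruct (Rle_dec (-y) y0); lra. }
        destruct (mvt_nz f df y (-e) Hd (ltac:(lra) : y < -e) (or_intror (ltac:(lra) : -e < 0))) as [x1 [H1 H2]].
        destruct (mvt_nz f df e y0 Hd (ltac:(lra) : e < y0) (or_introl (ltac:(lra) : 0 < e))) as [x2 [H3 H4]].
        assert (df x1 < df y0) by (apply Hm; lra).
        assert (df x2 < df y0) by (apply Hm; lra).
        assert (c < df y0) by auto.
        pose proof (Hsym e ltac:(lra)). nra.
  - assert (Hlt : y0 < y) by lra.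
    destruct (Rlt_or_le 0 y0) as [Hp|Hn].
    + destruct (mvt_nz f df y0 y Hd Hlt (or_introl Hp)) as [x [H1 H2]].
      assert (df y0 < df x) by (apply Hm; lra). nra.
    + destruct (Rlt_or_le y 0) as [Hn0|Hp0].
      * destruct (mvt_nz f df y0 y Hd Hlt (or_intror Hn0)) as [x [H1 H2]].
        assert (df y0 < df x) by (apply Hm; lra). nra.
      * assert (Hyp : 0 < y) by lra. assert (Hy0n : y0 < 0) by lra.
        set (e := Rmin y (-y0) / 2).
        assert (He : 0 < e /\ e < y /\ e < -y0).
        { unfold e; unfold Rmin; destruct (Rle_dec y (-y0)); lra. }
        destruct (mvt_nz f df e y Hd (ltac:(lra) : e < y) (or_introl (ltac:(lra) : 0 < e))) as [x2 [H3 H4]].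
        destruct (mvt_nz f df y0 (-e) Hd (ltac:(lra) : y0 < -e) (or_intror (ltac:(lra) : -e < 0))) as [x1 [H1 H2]].
        assert (df y0 < df x1) by (apply Hm; lra).
        assert (df y0 < df x2) by (apply Hm; lra).
        assert (df y0 < c) by auto.
        pose proof (Hsym e ltac:(lra)). nra.
Qed.

Definition F (y : R) : R := y * exp y / (exp y - 1).
Definition Fd (y : R) : R := exp y * (exp y - 1 - y) / (exp y - 1)^2.
Definition psi (y : R) : R := / y - / (exp y - 1).

Lemma Em1_ne y : y <> 0 -> exp y - 1 <> 0.
Proof. intros Hy E. pose proof (exp_pos_ne y Hy). rewrite E in H. lra. Qed.

Lemma F_pos y : y <> 0 -> 0 < F y.
Proof.
  intro Hy. unfold F. pose proof (exp_pos_ne y Hy). pose proof (exp_pos y).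
  pose proof (Em1_ne y Hy).
  replace (y * exp y / (exp y - 1)) with (y * (exp y - 1) * exp y / (exp y - 1)^2) by (field; auto).
  apply Rdiv_lt_0_compat; [nra|]. nra.
Qed.

Lemma Fd_eq y : y <> 0 -> Fd y = F y * psi y.
Proof. intro Hy. pose proof (Em1_ne y Hy). unfold Fd, F, psi. field; auto. Qed.

Lemma F_deriv y : y <> 0 -> derivable_pt_lim F y (Fd y).
Proof.
  intro Hy. pose proof (Em1_ne y Hy). apply is_derive_Reals. unfold F, Fd.
  auto_derive; auto. field; auto.
Qed.

Lemma Fd_deriv y : y <> 0 ->
  derivable_pt_lim Fd y (exp y * (y*(exp y + 1) - 2*(exp y - 1)) / (exp y - 1)^3).
Proof.
  intro Hy. pose proof (Em1_ne y Hy). apply is_derive_Reals. unfold Fd.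
  auto_derive. { intro E. apply H. nra. }
  field; auto.
Qed.

Lemma Fd_mono s t : s <> 0 -> t <> 0 -> s < t -> Fd s < Fd t.
Proof.
  apply (mono_gen Fd (fun y => exp y * (y*(exp y + 1) - 2*(exp y - 1)) / (exp y - 1)^3) (1/2)).
  - exact Fd_deriv.
  - intros y Hy. pose proof (G_sign y Hy). pose proof (exp_pos_ne y Hy).
    pose proof (exp_pos y). pose proof (Em1_ne y Hy).
    set (g := y * (exp y + 1) - 2 * (exp y - 1)) in *.
    assert (0 < g * (exp y - 1)).
    { destruct (Rlt_or_le 0 y); [nra|]. assert (y < 0) by nra. nra. }
    replace (exp y * g / (exp y - 1)^3) with (exp y * (g * (exp y - 1)) / ((exp y - 1)^2)^2)
      by (field; auto).
    apply Rdiv_lt_0_compat; [nra|]. apply pow_lt. nra.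
  - intros y Hy. pose proof (H_sign y ltac:(lra)). pose proof (exp_pos y).
    pose proof (Em1_ne y ltac:(lra)).
    assert (0 < exp y - / exp y - 2 * y) by nra.
    assert (Fd y - 1/2 = exp y * (exp y - / exp y - 2 * y) / (2*(exp y - 1)^2))
      by (unfold Fd; field; lra).
    assert (0 < exp y * (exp y - / exp y - 2 * y) / (2*(exp y - 1)^2)).
    { apply Rdiv_lt_0_compat; [nra|]. nra. } lra.
  - intros y Hy. pose proof (H_sign y ltac:(lra)). pose proof (exp_pos y).
    pose proof (Em1_ne y ltac:(lra)).
    assert (exp y - / exp y - 2 * y < 0) by nra.
    assert (Fd y - 1/2 = exp y * (exp y - / exp y - 2 * y) / (2*(exp y - 1)^2))
      by (unfold Fd; field; lra).
    assert (exp y * (exp y - / exp y - 2 * y) / (2*(exp y - 1)^2) < 0).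
    { apply Rdiv_neg_pos; [nra|]. nra. } lra.
Qed.

Lemma psi_half y : y <> 0 -> 1/2 - psi y = (y*(exp y + 1) - 2*(exp y - 1)) / (2 * (y * (exp y - 1))).
Proof. intro Hy. pose proof (Em1_ne y Hy). unfold psi. field; auto. Qed.

Lemma psi_deriv y : y <> 0 -> derivable_pt_lim psi y (- / y^2 + exp y / (exp y - 1)^2).
Proof.
  intro Hy. pose proof (Em1_ne y Hy). apply is_derive_Reals. unfold psi.
  auto_derive. { auto. } field; auto.
Qed.

Lemma mpsi_mono s t : s <> 0 -> t <> 0 -> s < t -> - psi s < - psi t.
Proof.
  apply (mono_gen (fun y => - psi y) (fun y => - (- / y^2 + exp y / (exp y - 1)^2)) (-1/2)).
  - intros y Hy. apply derivable_pt_lim_opp. apply psi_deriv; auto.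
  - intros y Hy. pose proof (K_ineq y Hy). pose proof (Em1_ne y Hy).
    pose proof (exp_pos y).
    assert (0 < y^2) by (apply pow2_gt_0; auto).
    assert (0 < (exp y - 1)^2) by (apply pow2_gt_0; auto).
    replace (- (- / y ^ 2 + exp y / (exp y - 1) ^ 2)) with
      (((exp y - 1)^2 - y^2 * exp y) / (y^2 * (exp y - 1)^2)) by (field; auto).
    apply Rdiv_lt_0_compat; nra.
  - intros y Hy. pose proof (psi_half y ltac:(lra)). pose proof (G_sign y ltac:(lra)).
    pose proof (exp_pos_ne y ltac:(lra)).
    assert (0 < (y * (exp y + 1) - 2 * (exp y - 1)) / (2 * (y * (exp y - 1)))).
    { apply Rdiv_lt_0_compat; nra. } lra.
  - intros y Hy. pose proof (psi_half y ltac:(lra)). pose proof (G_sign y ltac:(lra)).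
    pose proof (exp_pos_ne y ltac:(lra)).
    assert ((y * (exp y + 1) - 2 * (exp y - 1)) / (2 * (y * (exp y - 1))) < 0).
    { apply Rdiv_neg_pos; nra. } lra.
Qed.

Lemma F_sym e : 0 < e -> F e - F (-e) = 2 * (1/2) * e.
Proof.
  intro He. pose proof (Em1_ne e ltac:(lra)). pose proof (exp_pos e).
  unfold F. rewrite exp_Ropp.
  assert (/ exp e - 1 <> 0).
  { intro E. apply H. assert (exp e = 1). { rewrite <- (Rinv_inv (exp e)). rewrite (ltac:(lra) : / exp e = 1). apply Rinv_1. }
    lra. }
  field. auto. all: lra.
Qed.

Lemma T_ineq y y0 : y <> 0 -> y0 <> 0 -> y <> y0 ->
  F y0 * (1 + (y - y0) * psi y0) < F y.
Proof.
  intros Hy Hy0 Hne.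
  pose proof (tangent_gen F Fd (1/2) F_deriv Fd_mono) as T.
  assert (H1 : forall z, 0 < z -> 1/2 < Fd z).
  { intros z Hz. pose proof (H_sign z ltac:(lra)). pose proof (exp_pos z).
    pose proof (Em1_ne z ltac:(lra)).
    assert (0 < exp z - / exp z - 2 * z) by nra.
    assert (Fd z - 1/2 = exp z * (exp z - / exp z - 2 * z) / (2*(exp z - 1)^2))
      by (unfold Fd; field; lra).
    assert (0 < exp z * (exp z - / exp z - 2 * z) / (2*(exp z - 1)^2)).
    { apply Rdiv_lt_0_compat; [nra|]. nra. } lra. }
  assert (H2 : forall z, z < 0 -> Fd z < 1/2).
  { intros z Hz. pose proof (H_sign z ltac:(lra)). pose proof (exp_pos z).
    pose proof (Em1_ne z ltac:(lra)).
    assert (exp z - / exp z - 2 * z < 0) by nra.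
    assert (Fd z - 1/2 = exp z * (exp z - / exp z - 2 * z) / (2*(exp z - 1)^2))
      by (unfold Fd; field; lra).
    assert (exp z * (exp z - / exp z - 2 * z) / (2*(exp z - 1)^2) < 0).
    { apply Rdiv_neg_pos; [nra|]. nra. } lra. }
  specialize (T H1 H2 F_sym y y0 Hy Hy0 Hne).
  rewrite Fd_eq in T; auto. lra.
Qed.

Lemma lnF_deriv y : y <> 0 -> derivable_pt_lim (fun z => - ln (F z)) y (- psi y).
Proof.
  intro Hy. pose proof (Em1_ne y Hy). pose proof (F_pos y Hy).
  apply is_derive_Reals. unfold F in *.
  auto_derive. { auto. } unfold psi. field. split; auto. split; auto.
  pose proof (exp_pos y). intro E. nra.
Qed.

Lemma J_ineq y y0 : y <> 0 -> y0 <> 0 -> y <> y0 ->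
  ln (F y) < ln (F y0) + (y - y0) * psi y0.
Proof.
  intros Hy Hy0 Hne.
  assert (H1 : forall z, 0 < z -> -1/2 < - psi z).
  { intros z Hz. pose proof (psi_half z ltac:(lra)). pose proof (G_sign z ltac:(lra)).
    pose proof (exp_pos_ne z ltac:(lra)).
    assert (0 < (z * (exp z + 1) - 2 * (exp z - 1)) / (2 * (z * (exp z - 1)))).
    { apply Rdiv_lt_0_compat; nra. } lra. }
  assert (H2 : forall z, z < 0 -> - psi z < -1/2).
  { intros z Hz. pose proof (psi_half z ltac:(lra)). pose proof (G_sign z ltac:(lra)).
    pose proof (exp_pos_ne z ltac:(lra)).
    assert ((z * (exp z + 1) - 2 * (exp z - 1)) / (2 * (z * (exp z - 1))) < 0).
    { apply Rdiv_neg_pos; nra. } lra. }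
  assert (Hs : forall e, 0 < e -> - ln (F e) - - ln (F (-e)) = 2 * (-1/2) * e).
  { intros e He. pose proof (F_pos e ltac:(lra)). pose proof (F_pos (-e) ltac:(lra)).
    assert (F (-e) = F e * exp (-e)).
    { pose proof (Em1_ne e ltac:(lra)). pose proof (exp_pos e).
      unfold F. rewrite exp_Ropp.
      assert (/ exp e - 1 <> 0).
      { intro E. apply H3. assert (exp e = 1). { rewrite <- (Rinv_inv (exp e)). rewrite (ltac:(lra) : / exp e = 1). apply Rinv_1. }
        lra. }
      field; repeat split; auto; try lra. }
    rewrite H3, ln_mult, ln_exp; auto. lra. apply exp_pos. }
  pose proof (tangent_gen (fun z => - ln (F z)) (fun z => - psi z) (-1/2)
     lnF_deriv mpsi_mono H1 H2 Hs y y0 Hy Hy0 Hne) as T.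
  simpl in T. lra.
Qed.

Lemma psi_bounds y : y <> 0 -> 0 < psi y < 1.
Proof.
  intro Hy. pose proof (exp_pos_ne y Hy). pose proof (Em1_ne y Hy). pose proof (exp_pos y).
  pose proof (exp_ineq1 y Hy). pose proof (exp_ineq1 (-y) ltac:(lra)).
  rewrite exp_Ropp in H3.
  assert (exp y * (1 - y) < 1).
  { apply Rmult_lt_compat_l with (r := exp y) in H3; auto. rewrite Rinv_r in H3; lra. }
  assert (psi y = (exp y - 1 - y) / (y * (exp y - 1))) by (unfold psi; field; auto).
  rewrite H5. split.
  - apply Rdiv_lt_0_compat; lra.
  - apply (Rmult_lt_reg_r (y * (exp y - 1))); auto. unfold Rdiv. rewrite Rmult_assoc, Rinv_l; nra.
Qed.

Lemma ln_exp_div X V : 0 < X -> 0 < V -> exp (ln X - ln V) = X / V.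
Proof. intros. rewrite <- ln_div; auto. apply exp_ln. apply Rdiv_lt_0_compat; auto. Qed.

Lemma plog_eq p u v : u > v -> v > 0 -> p <> 0 -> p <> -1 ->
  plogmean_pow p u v =
  exp ((p+1) * ln u) * (ln u - ln v) / ((u - v) * F ((p+1) * (ln u - ln v))).
Proof.
  intros Huv Hv Hp Hp1.
  assert (Hl : 0 < ln u - ln v) by (pose proof (ln_increasing v u Hv Huv); lra).
  assert (Hx : p + 1 <> 0) by lra.
  set (x := p + 1) in *.
  assert (Hxl : x * (ln u - ln v) <> 0) by (apply Rmult_integral_contrapositive; lra).
  pose proof (F_pos _ Hxl) as HF.
  set (X := exp (x * ln u)). set (V := exp (x * ln v)).
  assert (HX : 0 < X) by apply exp_pos. assert (HV : 0 < V) by apply exp_pos.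
  assert (HE : exp (x * (ln u - ln v)) = X / V).
  { unfold X, V. rewrite <- ln_exp_div by apply exp_pos. rewrite !ln_exp. f_equal; ring. }
  assert (Q : (Rpower u x - Rpower v x) / (x * (u - v)) =
             X * (ln u - ln v) / ((u - v) * F (x * (ln u - ln v)))).
  { unfold Rpower. fold X V. unfold F in *. rewrite HE in *.
    assert (X / V - 1 <> 0) by (apply Em1_ne in Hxl; rewrite HE in Hxl; auto).
    assert (X - V <> 0) by (intro E; apply H; replace X with V by lra; field; lra).
    field. repeat split; lra. }
  unfold plogmean_pow, plogmean. destruct (Req_EM_T u v) as [E|_]; [lra|].
  fold x. rewrite Q. rewrite Rpower_mult. rewrite Rinv_l by auto. rewrite Rpower_1. reflexivity.
  apply Rdiv_lt_0_compat; [apply Rmult_lt_0_compat; lra|].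
  apply Rmult_lt_0_compat; lra.
Qed.

Lemma identric_pos u v : 0 < u -> 0 < v -> 0 < identric u v.
Proof.
  intros. unfold identric. destruct (Req_EM_T u v); auto.
  apply Rmult_lt_0_compat. apply Rinv_0_lt_compat, exp_pos. unfold Rpower. apply exp_pos.
Qed.

Lemma ln_identric U V : 0 < U -> 0 < V -> U <> V ->
  ln (identric U V) = (U * ln U - V * ln V) / (U - V) - 1.
Proof.
  intros HU HV Hne. unfold identric. destruct (Req_EM_T U V) as [E|_]; [lra|].
  rewrite ln_mult. 2: apply Rinv_0_lt_compat, exp_pos. 2: unfold Rpower; apply exp_pos.
  rewrite ln_Rinv by apply exp_pos. rewrite ln_exp.
  unfold Rpower at 1. rewrite ln_exp.
  unfold Rpower. rewrite ln_div by apply exp_pos. rewrite !ln_exp.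
  field. lra.
Qed.

Lemma lnI_eq u v x0 : u > v -> v > 0 -> x0 <> 0 ->
  ln (identric (Rpower u x0) (Rpower v x0)) =
  x0 * (ln u - (ln u - ln v) * psi (x0 * (ln u - ln v))).
Proof.
  intros Huv Hv Hx.
  assert (Hl : 0 < ln u - ln v) by (pose proof (ln_increasing v u Hv Huv); lra).
  assert (Hxl : x0 * (ln u - ln v) <> 0) by (apply Rmult_integral_contrapositive; lra).
  set (X := Rpower u x0). set (V := Rpower v x0).
  assert (HX : 0 < X) by (unfold X, Rpower; apply exp_pos).
  assert (HV : 0 < V) by (unfold V, Rpower; apply exp_pos).
  assert (HE : exp (x0 * (ln u - ln v)) = X / V).
  { unfold X, V, Rpower. rewrite <- ln_exp_div by apply exp_pos. rewrite !ln_exp. f_equal; ring. }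
  assert (H1 : X / V - 1 <> 0) by (apply Em1_ne in Hxl; rewrite HE in Hxl; auto).
  assert (H2 : X - V <> 0) by (intro E; apply H1; replace X with V by lra; field; lra).
  rewrite ln_identric; auto.
  assert (ln X = x0 * ln u) by (unfold X, Rpower; rewrite ln_exp; ring).
  assert (ln V = x0 * ln v) by (unfold V, Rpower; rewrite ln_exp; ring).
  rewrite H, H0. unfold psi. rewrite HE. field. repeat split; auto; try lra.
  all: intro E; apply H2; lra.
Qed.

Lemma logmean_eq u v : u > v -> v > 0 -> logmean u v = u / F (ln u - ln v).
Proof.
  intros Huv Hv.
  assert (Hl : 0 < ln u - ln v) by (pose proof (ln_increasing v u Hv Huv); lra).
  unfold logmean. destruct (Req_EM_T u v) as [E|_]; [lra|].
  unfold F. rewrite ln_exp_div by lra.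
  field. repeat split; try lra.
Qed.

Lemma core1 (d lA lB x x0 : R) : 0 < lA -> lA <= d -> 0 < lB -> x <> 0 -> x0 <> 0 -> x <> x0 ->
  exp (x0 * d) * F (x0 * lB) / F (x0 * lA) *
    (1 + (x - x0) * (d - lA * psi (x0 * lA) + lB * psi (x0 * lB)))
  < exp (x * d) * F (x * lB) / F (x * lA).
Proof.
  intros HA Hd HB Hx Hx0 Hne.
  assert (nz : forall l y, 0 < l -> y <> 0 -> y * l <> 0).
  { intros. apply Rmult_integral_contrapositive; split; lra. }
  pose proof (nz lA x HA Hx) as n1. pose proof (nz lA x0 HA Hx0) as n2.
  pose proof (nz lB x HB Hx) as n3. pose proof (nz lB x0 HB Hx0) as n4.
  assert (nA : x * lA <> x0 * lA) by (intro E; apply Hne; apply (Rmult_eq_reg_r lA); lra).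
  assert (nB : x * lB <> x0 * lB) by (intro E; apply Hne; apply (Rmult_eq_reg_r lB); lra).
  pose proof (J_ineq _ _ n1 n2 nA) as J.
  pose proof (T_ineq _ _ n3 n4 nB) as T.
  pose proof (psi_bounds _ n2) as [pA1 pA2]. pose proof (psi_bounds _ n4) as [pB1 pB2].
  set (r := x - x0) in *.
  set (eA := lA * psi (x0 * lA)). set (eB := lB * psi (x0 * lB)).
  assert (HeA : 0 < eA < lA).
  { unfold eA; split. apply Rmult_lt_0_compat; lra.
    assert (lA * psi (x0 * lA) < lA * 1) by (apply Rmult_lt_compat_l; lra). lra. }
  assert (HeB : 0 < eB) by (unfold eB; apply Rmult_lt_0_compat; lra).
  pose proof (F_pos _ n1) as f1. pose proof (F_pos _ n2) as f2.
  pose proof (F_pos _ n3) as f3. pose proof (F_pos _ n4) as f4.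
  set (FA := F (x * lA)) in *. set (FA0 := F (x0 * lA)) in *.
  set (FB := F (x * lB)) in *. set (FB0 := F (x0 * lB)) in *.
  assert (J' : FA < FA0 * exp (r * eA)).
  { rewrite <- (exp_ln FA) by auto. rewrite <- (exp_ln FA0) by auto.
    rewrite <- exp_plus. apply exp_increasing.
    replace (r * eA) with ((x * lA - x0 * lA) * psi (x0 * lA)) by (unfold r, eA; ring). lra. }
  assert (T' : FB0 * (1 + r * eB) < FB).
  { replace (r * eB) with ((x * lB - x0 * lB) * psi (x0 * lB)) by (unfold r, eB; ring). lra. }
  assert (Ex : exp (x * d) = exp (x0 * d) * exp (r * d)) by (rewrite <- exp_plus; f_equal; unfold r; ring).
  rewrite Ex.
  set (s := d - eA).
  assert (Hs : 0 < s) by (unfold s; lra).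
  pose proof (exp_pos (x0 * d)) as P0.
  set (E0 := exp (x0 * d)) in *.
  assert (Goal' : 1 + r * (s + eB) < exp (r * d) * (FB / FB0) * (FA0 / FA)).
  { assert (QA : exp (r * s) < exp (r * d) * (FA0 / FA)).
    { assert (exp (r * d) = exp (r * s) * exp (r * eA)) by (rewrite <- exp_plus; f_equal; unfold s; ring).
      rewrite H. pose proof (exp_pos (r * s)). pose proof (exp_pos (r * eA)).
      apply (Rmult_lt_reg_r FA); auto.
      replace (exp (r * s) * exp (r * eA) * (FA0 / FA) * FA) with (exp (r * s) * (FA0 * exp (r * eA))) by (field; lra).
      apply Rmult_lt_compat_l; auto. }
    assert (PB : 1 + r * eB < FB / FB0).
    { apply (Rmult_lt_reg_r FB0); auto. replace (FB / FB0 * FB0) with FB by (field; lra). lra. }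
    pose proof (exp_ineq1_le (r * s)).
    assert (0 < FB / FB0) by (apply Rdiv_lt_0_compat; auto).
    assert (0 < FA0 / FA) by (apply Rdiv_lt_0_compat; auto).
    destruct (Rle_or_lt 0 (1 + r * eB)).
    - assert (exp (r * s) * (FB / FB0) < exp (r * d) * (FB / FB0) * (FA0 / FA)).
      { replace (exp (r * d) * (FB / FB0) * (FA0 / FA)) with (exp (r * d) * (FA0 / FA) * (FB / FB0)) by ring.
        apply Rmult_lt_compat_r; auto. }
      assert ((1 + r * s) * (1 + r * eB) <= exp (r * s) * (FB / FB0)).
      { apply Rle_trans with (exp (r * s) * (1 + r * eB)).
        apply Rmult_le_compat_r; lra. apply Rmult_le_compat_l; [pose proof (exp_pos (r*s)); lra | lra]. }
      assert (0 <= r * r * s * eB).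
      { assert (0 <= r * r) by apply Rle_0_sqr. 
        apply Rmult_le_pos; [apply Rmult_le_pos|]; lra. }
      assert ((1 + r * s) * (1 + r * eB) = 1 + r * (s + eB) + r * r * s * eB) by ring.
      lra.
    - assert (r < 0).
      { destruct (Rlt_or_le r 0); auto.
        assert (0 <= r * eB) by (apply Rmult_le_pos; lra). lra. }
      assert (0 < exp (r * d) * (FB / FB0) * (FA0 / FA)).
      { apply Rmult_lt_0_compat; [apply Rmult_lt_0_compat; auto; apply exp_pos | auto]. }
      assert (r * s < 0) by (apply Rmult_neg_pos; lra).
      assert (r * (s + eB) = r * s + r * eB) by ring.
      lra. }
  replace (E0 * exp (r * d) * FB / FA) with (E0 * FB0 / FA0 * (exp (r * d) * (FB / FB0) * (FA0 / FA)))
    by (field; lra).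
  apply Rmult_lt_compat_l.
  { apply Rdiv_lt_0_compat; auto. apply Rmult_lt_0_compat; auto. }
  replace (d - eA + eB) with (s + eB) by (unfold s; ring). auto.
Qed.

Lemma facts_pos t : 0 < t ->
  let E := exp t in
  t * psi t = 1 - t / (E - 1) /\ 1 + t * psi t < F t /\ 1 - t * psi t < / F t /\
  0 < t * psi t < t /\ 0 < t * E - E + 1 /\ 1 < E /\ 0 < 1 - t * psi t.
Proof.
  intros Ht E.
  assert (Hn : t <> 0) by lra.
  pose proof (exp_pos_ne t Hn). pose proof (Em1_ne t Hn). pose proof (exp_pos t).
  pose proof (G_sign t Hn). pose proof (K_ineq t Hn). pose proof (psi_bounds t Hn).
  pose proof (exp_ineq1 t Hn).
  fold E in H, H0, H1, H2, H3, H5.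
  assert (HE1 : 0 < E - 1) by lra.
  assert (Hg : 0 < t * (E + 1) - 2 * (E - 1)).
  { apply (Rmult_lt_reg_l t); lra. }
  assert (Htp : t * psi t = 1 - t / (E - 1)) by (unfold psi; fold E; field; auto).
  assert (HF : F t = t * E / (E - 1)) by reflexivity.
  split; [auto|]. split.
  { rewrite Htp, HF. apply (Rmult_lt_reg_r (E - 1)); auto.
    replace ((1 + (1 - t / (E - 1))) * (E - 1)) with (2 * (E - 1) - t) by (field; lra).
    replace (t * E / (E - 1) * (E - 1)) with (t * E) by (field; lra). lra. }
  split.
  { rewrite Htp, HF.
    replace (/ (t * E / (E - 1))) with ((E - 1) / (t * E)) by (field; lra).
    replace (1 - (1 - t / (E - 1))) with (t / (E - 1)) by ring.
    assert (0 < t * E) by (apply Rmult_lt_0_compat; lra).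
    apply (Rmult_lt_reg_r ((E - 1) * (t * E))). apply Rmult_lt_0_compat; lra.
    replace (t / (E - 1) * ((E - 1) * (t * E))) with (t^2 * E) by (field; lra).
    replace ((E - 1) / (t * E) * ((E - 1) * (t * E))) with ((E - 1)^2) by (field; lra). lra. }
  split.
  { destruct H4. split; [apply Rmult_lt_0_compat; lra|].
    assert (t * psi t < t * 1) by (apply Rmult_lt_compat_l; lra). lra. }
  split.
  { pose proof (exp_ineq1 (-t) ltac:(lra)). rewrite exp_Ropp in H6. fold E in H6.
    assert (E * (1 - t) < 1).
    { apply Rmult_lt_compat_l with (r := E) in H6; auto. rewrite Rinv_r in H6; lra. }
    lra. }
  split; [lra|].
  destruct H4. assert (t * psi t < t * 1) by (apply Rmult_lt_compat_l; lra).
  rewrite Htp. assert (0 < t / (E - 1)) by (apply Rdiv_lt_0_compat; lra). lra.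
Qed.

Lemma core2 y z d : 0 < y -> y <= d -> 0 < z ->
  1 - exp (-d) * F y / F z < d - y * psi y + z * psi z /\
  d - y * psi y + z * psi z < exp d * F z / F y - 1.
Proof.
  intros Hy Hd Hz.
  destruct (facts_pos y Hy) as [Ay1 [Ay2 [Ay3 [Ay4 [Ay5 [Ay6 Ay7]]]]]].
  destruct (facts_pos z Hz) as [Az1 [Az2 [Az3 [Az4 [Az5 [Az6 Az7]]]]]].
  pose proof (F_pos y ltac:(lra)) as Ky. pose proof (F_pos z ltac:(lra)) as Kz.
  set (eA := y * psi y) in *. set (eB := z * psi z) in *.
  set (E := exp y) in *. set (t := d - y).
  assert (Ht : 0 <= t) by (unfold t; lra).
  assert (Hed : exp d = E * exp t) by (unfold E, t; rewrite <- exp_plus; f_equal; ring).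
  pose proof (exp_ineq1_le t) as Et.
  pose proof (exp_ineq1_le (-t)) as Emt.
  set (FY := F y) in *. set (FZ := F z) in *.
  split.
  - assert (Hemd : exp (-d) = / E * exp (-t)).
    { unfold E, t. rewrite <- exp_Ropp, <- exp_plus. f_equal; ring. }
    assert (a1 : (1 + eA) * (1 - eB) < FY / FZ).
    { unfold Rdiv. apply Rmult_le_0_lt_compat; lra. }
    set (w := / E * (1 + eA)).
    assert (Hw0 : 0 < w) by (unfold w; apply Rmult_lt_0_compat; [apply Rinv_0_lt_compat|]; lra).
    assert (Hw1 : w <= 1).
    { unfold w. apply (Rmult_le_reg_l E); [lra|].
      rewrite <- Rmult_assoc, Rinv_r by lra. pose proof (exp_ineq1_le y). fold E in H. lra. }
    assert (Hw2 : 0 < w - 1 + y - eA).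
    { unfold w. rewrite Ay1.
      pose proof (G_sign y ltac:(lra)). fold E in H.
      assert (0 < y * (E + 1) - 2 * (E - 1)) by (apply (Rmult_lt_reg_l y); lra).
      replace (/ E * (1 + (1 - y / (E - 1))) - 1 + y - (1 - y / (E - 1)))
        with ((y * (E + 1) - 2 * (E - 1)) / E) by (field; lra).
      apply Rdiv_lt_0_compat; lra. }
    assert (b1 : w * (1 - eB) * (1 - t) <= exp (-d) * ((1 + eA) * (1 - eB))).
    { rewrite Hemd. replace (w * (1 - eB) * (1 - t)) with (/ E * (1 - t) * ((1 + eA) * (1 - eB))) by (unfold w; ring).
      apply Rmult_le_compat_r. apply Rmult_le_pos; lra.
      apply Rmult_le_compat_l. left; apply Rinv_0_lt_compat; lra. lra. }
    assert (b2 : exp (-d) * ((1 + eA) * (1 - eB)) < exp (-d) * (FY / FZ)).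
    { apply Rmult_lt_compat_l; auto. apply exp_pos. }
    assert (b3 : w * (1 - eB) * (1 - t) - (1 - y - t + eA - eB)
                 = (w - 1 + y - eA) + eB * (1 - w) + t * (1 - w * (1 - eB))) by ring.
    assert (0 <= eB * (1 - w)) by (apply Rmult_le_pos; lra).
    assert (0 <= t * (1 - w * (1 - eB))).
    { apply Rmult_le_pos; auto. assert (w * (1 - eB) <= w * 1) by (apply Rmult_le_compat_l; lra). lra. }
    replace (exp (-d) * FY / FZ) with (exp (-d) * (FY / FZ)) by (unfold Rdiv; ring).
    unfold t in *. lra.
  - assert (b1 : (1 + eB) * (1 - eA) < FZ / FY).
    { unfold Rdiv. apply Rmult_le_0_lt_compat; lra. }
    set (X := exp d * (1 - eA)).
    assert (HX : 1 + d - eA <= X).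
    { unfold X. rewrite Ay1. rewrite Hed.
      assert (E * (1 + t) <= E * exp t) by (apply Rmult_le_compat_l; lra).
      assert (0 < y / (E - 1)) by (apply Rdiv_lt_0_compat; lra).
      assert (E * (1 + t) * (y / (E - 1)) <= E * exp t * (y / (E - 1))) by (apply Rmult_le_compat_r; lra).
      assert (E * (1 + t) * (y / (E - 1)) - (1 + d - (1 - y / (E - 1)))
              = t * (y * E - E + 1) / (E - 1)) by (unfold t; field; lra).
      assert (0 <= t * (y * E - E + 1) / (E - 1)).
      { apply Rdiv_le_0_compat; [apply Rmult_le_pos|]; lra. }
      replace (1 - (1 - y / (E - 1))) with (y / (E - 1)) by ring. lra. }
    assert (b2 : exp d * ((1 + eB) * (1 - eA)) < exp d * (FZ / FY)).
    { apply Rmult_lt_compat_l; auto. apply exp_pos. }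
    assert (b3 : exp d * ((1 + eB) * (1 - eA)) = X + eB * X) by (unfold X; ring).
    assert (eB * 1 < eB * X) by (apply Rmult_lt_compat_l; lra).
    replace (exp d * FZ / FY) with (exp d * (FZ / FY)) by (unfold Rdiv; ring).
    lra.
Qed.

Lemma core3 y : 0 < y ->
  1 - y / (exp y - 1) < y - y * psi y /\ y - y * psi y < (exp y - 1) / y - 1.
Proof.
  intro Hy.
  destruct (facts_pos y Hy) as [Ay1 [Ay2 [Ay3 [Ay4 [Ay5 [Ay6 Ay7]]]]]].
  rewrite Ay1. pose proof (G_sign y ltac:(lra)). pose proof (K_ineq y ltac:(lra)).
  set (E := exp y) in *.
  assert (0 < y * (E + 1) - 2 * (E - 1)) by (apply (Rmult_lt_reg_l y); lra).
  split.
  - assert (y - (1 - y / (E - 1)) - (1 - y / (E - 1)) = (y * (E + 1) - 2 * (E - 1)) / (E - 1))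
      by (field; lra).
    assert (0 < (y * (E + 1) - 2 * (E - 1)) / (E - 1)) by (apply Rdiv_lt_0_compat; lra). lra.
  - assert ((E - 1) / y - 1 - (y - (1 - y / (E - 1))) = ((E - 1)^2 - y^2 * E) / (y * (E - 1)))
      by (field; lra).
    assert (0 < ((E - 1)^2 - y^2 * E) / (y * (E - 1))).
    { apply Rdiv_lt_0_compat; [lra|]. apply Rmult_lt_0_compat; lra. } lra.
Qed.

Lemma ln_le_of b c : c > 0 -> b >= c -> ln c <= ln b.
Proof. intros. destruct (Rle_lt_or_eq_dec c b); [lra| |].
  left; apply ln_increasing; lra. subst; lra. Qed.

Lemma part1 a b c d p q : a > b -> b >= c -> c > d -> d > 0 ->
  p <> 0 -> p <> -1 -> q <> 0 -> q <> -1 -> p <> q ->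
  plogmean_pow q a b / plogmean_pow q c d *
    (1 + (p - q) / (q + 1) *
       ln (identric (Rpower a (q + 1)) (Rpower b (q + 1)) /
           identric (Rpower c (q + 1)) (Rpower d (q + 1))))
  < plogmean_pow p a b / plogmean_pow p c d.
Proof.
  intros Hab Hbc Hcd Hd Hp Hp1 Hq Hq1 Hpq.
  assert (lA_pos : 0 < ln a - ln b) by (pose proof (ln_increasing b a ltac:(lra) Hab); lra).
  assert (lB_pos : 0 < ln c - ln d) by (pose proof (ln_increasing d c ltac:(lra) Hcd); lra).
  pose proof (ln_le_of b c ltac:(lra) Hbc) as Hbc'.
  rewrite (plog_eq p a b), (plog_eq p c d), (plog_eq q a b), (plog_eq q c d); try lra.
  assert (Hx0 : q + 1 <> 0) by lra.
  assert (P1 : 0 < identric (Rpower a (q + 1)) (Rpower b (q + 1)))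
    by (apply identric_pos; unfold Rpower; apply exp_pos).
  assert (P2 : 0 < identric (Rpower c (q + 1)) (Rpower d (q + 1)))
    by (apply identric_pos; unfold Rpower; apply exp_pos).
  rewrite ln_div by auto.
  rewrite (lnI_eq a b), (lnI_eq c d); try lra.
  set (x := p + 1). set (x0 := q + 1).
  set (lA := ln a - ln b) in *. set (lB := ln c - ln d) in *.
  set (d0 := ln a - ln c).
  assert (Hx : x <> 0) by (unfold x; lra).
  assert (Hne : x <> x0) by (unfold x, x0; lra).
  assert (nz : forall l y, 0 < l -> y <> 0 -> y * l <> 0).
  { intros. apply Rmult_integral_contrapositive; split; lra. }
  pose proof (F_pos _ (nz lA x lA_pos Hx)). pose proof (F_pos _ (nz lB x lB_pos Hx)).
  pose proof (F_pos _ (nz lA x0 lA_pos Hx0)). pose proof (F_pos _ (nz lB x0 lB_pos Hx0)).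
  assert (HdA : lA <= d0) by (unfold d0, lA; lra).
  pose proof (core1 d0 lA lB x x0 lA_pos HdA lB_pos Hx Hx0 Hne) as C.
  assert (E1 : forall y, exp (y * ln a) = exp (y * ln c) * exp (y * d0)).
  { intro y. rewrite <- exp_plus. f_equal. unfold d0. ring. }
  rewrite !E1.
  set (K := lA * (c - d) / (lB * (a - b))).
  assert (HK : 0 < K).
  { unfold K. apply Rdiv_lt_0_compat; apply Rmult_lt_0_compat; lra. }
  pose proof (exp_pos (x * ln c)). pose proof (exp_pos (x0 * ln c)).
  assert (L : exp (x * ln c) * exp (x * d0) * lA / ((a - b) * F (x * lA)) /
              (exp (x * ln c) * lB / ((c - d) * F (x * lB)))
              = K * (exp (x * d0) * F (x * lB) / F (x * lA))).
  { unfold K. field. repeat split; lra. }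
  assert (R : exp (x0 * ln c) * exp (x0 * d0) * lA / ((a - b) * F (x0 * lA)) /
              (exp (x0 * ln c) * lB / ((c - d) * F (x0 * lB))) *
              (1 + (p - q) / x0 * (x0 * (ln a - lA * psi (x0 * lA)) - x0 * (ln c - lB * psi (x0 * lB))))
              = K * (exp (x0 * d0) * F (x0 * lB) / F (x0 * lA) *
                (1 + (x - x0) * (d0 - lA * psi (x0 * lA) + lB * psi (x0 * lB))))).
  { assert (Hpq' : p - q = x - x0) by (unfold x, x0; ring). rewrite Hpq'.
    unfold K, d0. field. repeat split; try lra.
    all: exact Hx0. }
  rewrite L, R. apply Rmult_lt_compat_l; auto.
Qed.

Lemma lnI1 u v : u > v -> v > 0 -> ln (identric u v) = ln u - (ln u - ln v) * psi (ln u - ln v).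
Proof.
  intros. pose proof (lnI_eq u v 1 H H0 ltac:(lra)). rewrite !Rpower_1 in H1 by lra.
  rewrite H1. rewrite !Rmult_1_l. reflexivity.
Qed.

Lemma part2 a b c d : a > b -> b >= c -> c > d -> d > 0 ->
  exp (1 - logmean c d / logmean a b) < identric a b / identric c d /\
  identric a b / identric c d < exp (logmean a b / logmean c d - 1).
Proof.
  intros Hab Hbc Hcd Hd.
  assert (lA_pos : 0 < ln a - ln b) by (pose proof (ln_increasing b a ltac:(lra) Hab); lra).
  assert (lB_pos : 0 < ln c - ln d) by (pose proof (ln_increasing d c ltac:(lra) Hcd); lra).
  pose proof (ln_le_of b c ltac:(lra) Hbc) as Hbc'.
  pose proof (identric_pos a b ltac:(lra) ltac:(lra)).
  pose proof (identric_pos c d ltac:(lra) ltac:(lra)).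
  rewrite <- (exp_ln (identric a b / identric c d)) by (apply Rdiv_lt_0_compat; auto).
  rewrite ln_div by auto. rewrite (lnI1 a b), (lnI1 c d) by lra.
  rewrite (logmean_eq a b), (logmean_eq c d) by lra.
  set (lA := ln a - ln b) in *. set (lB := ln c - ln d) in *.
  set (d0 := ln a - ln c).
  assert (HdA : lA <= d0) by (unfold d0, lA; lra).
  destruct (core2 lA lB d0 lA_pos HdA lB_pos) as [C1 C2].
  pose proof (F_pos lA ltac:(lra)). pose proof (F_pos lB ltac:(lra)).
  assert (Ec : exp d0 = a / c) by (unfold d0; apply ln_exp_div; lra).
  assert (Emc : exp (- d0) = c / a).
  { rewrite exp_Ropp, Ec. field. lra. }
  assert (R1 : c / F lB / (a / F lA) = exp (- d0) * F lA / F lB) by (rewrite Emc; field; lra).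
  assert (R2 : a / F lA / (c / F lB) = exp d0 * F lB / F lA) by (rewrite Ec; field; lra).
  rewrite R1, R2.
  replace (ln a - lA * psi lA - (ln c - lB * psi lB)) with (d0 - lA * psi lA + lB * psi lB)
    by (unfold d0; ring).
  split; apply exp_increasing; lra.
Qed.

Lemma part3 a b : a > b -> b > 0 ->
  exp (1 - b / logmean a b) < identric a b / b /\
  identric a b / b < exp (logmean a b / b - 1).
Proof.
  intros Hab Hb.
  assert (lA_pos : 0 < ln a - ln b) by (pose proof (ln_increasing b a ltac:(lra) Hab); lra).
  pose proof (identric_pos a b ltac:(lra) ltac:(lra)).
  rewrite <- (exp_ln (identric a b / b)) by (apply Rdiv_lt_0_compat; auto).
  rewrite ln_div by lra. rewrite (lnI1 a b) by lra.
  rewrite (logmean_eq a b) by lra.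
  set (y := ln a - ln b) in *.
  destruct (core3 y lA_pos) as [C1 C2].
  assert (Ey : exp y = a / b) by (unfold y; apply ln_exp_div; lra).
  assert (1 < exp y) by (pose proof (exp_ineq1 y ltac:(lra)); lra).
  assert (R1 : b / (a / F y) = y / (exp y - 1)) by (unfold F; rewrite Ey in *; field; lra).
  assert (R2 : a / F y / b = (exp y - 1) / y) by (unfold F; rewrite Ey in *; field; lra).
  rewrite R1, R2.
  replace (ln a - y * psi y - ln b) with (y - y * psi y) by (unfold y; ring).
  split; apply exp_increasing; lra.
Qed.

Theorem theorem3p1 :
  (forall a b c d : R, a > b -> b >= c -> c > d -> d > 0 ->
     (forall p q : R, p <> 0 -> p <> -1 -> q <> 0 -> q <> -1 ->
        let lhs := plogmean_pow p a b / plogmean_pow p c d in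
        let rhs := plogmean_pow q a b / plogmean_pow q c d *
                   (1 + (p - q) / (q + 1) *
                        ln (identric (Rpower a (q + 1)) (Rpower b (q + 1)) /
                            identric (Rpower c (q + 1)) (Rpower d (q + 1)))) in
        lhs >= rhs /\ (lhs = rhs <-> p = q)) /\
     (exp (1 - logmean c d / logmean a b) < identric a b / identric c d /\
      identric a b / identric c d < exp (logmean a b / logmean c d - 1))) /\
  (forall a b : R, a > b -> b > 0 ->
     exp (1 - b / logmean a b) < identric a b / b /\
     identric a b / b < exp (logmean a b / b - 1)).
Proof.
  split.
  - intros a b c d Hab Hbc Hcd Hd. split.
    + intros p q Hp Hp1 Hq Hq1 lhs rhs.
      destruct (Req_dec p q) as [E|Ne].
      * subst q. assert (lhs = rhs) by (unfold lhs, rhs; replace ((p - p) / (p + 1)) with 0 by (field; lra); ring).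
        split; [lra|]. tauto.
      * pose proof (part1 a b c d p q Hab Hbc Hcd Hd Hp Hp1 Hq Hq1 Ne).
        fold lhs rhs in H. split; [lra|]. split; intro; [lra|contradiction].
    + apply part2; auto.
  - apply part3.
Qed.
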